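(* Let $d\ge2$, $n\ge d+1$, $p\ge2$ a prime, $\Lambda\in X_{n,d}$, $M=M^p_n(\Lambda)$ with group $H_0\cong\mathbb{Z}_p^n$. If $K<H_0$ is a subgroup isomorphic to $\mathbb{Z}_p^{n-r}$ (for some integer $r\ge0$) acting freely on $M$ (i.e. no non-trivial element of $K$ has a fixed point on $M$), then $n+1\le (p^r-1)/(p-1)$. In particular no such $K$ exists with $r=1$, and for $p=2$ none exists with $r=2$.
   Context: For $q=[\rho_1:\cdots:\rho_{d+1}]\in\mathbb{P}^d$ let $L_q=\{\rho_1t_1+\cdots+\rho_{d+1}t_{d+1}=0\}$. Hyperplanes are in general position if any $\min\{N,d+1\}$ of their $N$ coefficient vectors are linearly independent. Let $e_1,\dots,e_{d+1}$ be the coordinate points of $\mathbb{P}^d$ and $e_{d+2}=[1:\cdots:1]$. For $\Lambda=(\lambda_{i,j})_{1\le i\le n-d-1,\,1\le j\le d}\in\mathbb{C}^{d(n-d-1)}$ put $L_j(\Lambda)=L_{e_j}$ ($1\le j\le d+2$) and $L_j(\Lambda)=L_{[\lambda_{j-d-2,1}:\cdots:\lambda_{j-d-2,d}:1]}$ ($d+3\le j\le n+1$); $X_{n,d}$ is the set of $\Lambda$ for which $L_1(\Lambda),\dots,L_{n+1}(\Lambda)$ are in general position. For $\Lambda\in X_{n,d}$, setting $\lambda_{0,j}=1$, $M^k_n(\Lambda)\subset\mathbb{P}^n$ is the common zero set of $\lambda_{i,1}x_1^k+\cdots+\lambda_{i,d}x_d^k+x_{d+1}^k+x_{d+2+i}^k$,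 $i=0,\dots,n-d-1$. $H_0=\langle\varphi_1,\dots,\varphi_{n+1}\rangle$, where $\varphi_j$ multiplies the $j$-th homogeneous coordinate by $e^{2\pi\sqrt{-1}/k}$. *)

(* Defs.v *)
From mathcomp Require Import all_boot all_order all_algebra all_fingroup.
From mathcomp Require Import all_classical all_reals all_analysis.
From mathcomp Require Import complex.
Set Implicit Arguments. Unset Strict Implicit. Unset Printing Implicit Defensive.
Import GRing.Theory Num.Theory.
Local Open Scope ring_scope.

Definition mx_at (C : nzRingType) m k (A : 'M[C]_(m, k)) (i j : nat) : C :=
  match insub i, insub j with
  | Some i', Some j' => A i' j'
  | _, _ => 0
  end.

(* Hyperplanes with coefficient vectors v_1..v_N in C^m are in general
   position: any min(N,m) of the coefficient vectors are linearly
   independent (rows of the matrix are linearly free). *)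
Definition general_position (F : fieldType) N m (v : 'I_N -> 'rV[F]_m) : Prop :=
  forall f : 'I_(minn N m) -> 'I_N, injective f ->
    row_free (\matrix_(i < minn N m) v (f i)).

(* Coefficient vector of L_j(Lambda), j = 0..n (0-based; paper index j+1),
   in C^(d+1).  Lambda : 'M_(n-d-1, d), entries 0-based. *)
Definition coefL (C : nzRingType) n d (Lam : 'M[C]_(n - d - 1, d))
    (j : 'I_n.+1) : 'rV[C]_(d.+1) :=
  \row_(k < d.+1)
    if (j < d.+1)%N then (if (nat_of_ord j == nat_of_ord k) then 1 else 0)
    else if nat_of_ord j == d.+1 then 1
    else if (k < d)%N then mx_at Lam (j - d.+2) k else 1.

Definition X_nd (C : fieldType) n d (Lam : 'M[C]_(n - d - 1, d)) : Prop :=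
  general_position (coefL Lam).

(* lambda_{i,j} with lambda_{0,j} = 1 (i = 0..n-d-1, j = 0..d-1, 0-based j) *)
Definition lam0 (C : nzRingType) n d (Lam : 'M[C]_(n - d - 1, d)) (i j : nat) : C :=
  if i == 0%N then 1 else mx_at Lam i.-1 j.

(* Homogeneous coordinates x_1..x_{n+1} are x 0 .. x n. *)
Definition coord (C : nzRingType) n (x : 'I_n.+1 -> C) (j : nat) : C := x (inord j).

Definition on_fermat (C : nzRingType) n d k (Lam : 'M[C]_(n - d - 1, d))
    (x : 'I_n.+1 -> C) : Prop :=
  forall i : nat, (i < n - d)%N ->
    \sum_(j < d) lam0 Lam i j * coord x j ^+ k
      + coord x d ^+ k + coord x (d.+1 + i) ^+ k = 0.

(* A point of P^n: a nonzero vector up to scaling. *)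
Definition nonzero_vec (C : nzRingType) n (x : 'I_n.+1 -> C) : Prop :=
  exists j, x j != 0.

Definition zeta (R : realType) (k : nat) : R[i] :=
  (cos (2 * pi / k%:R) +i* sin (2 * pi / k%:R))%C.

(* Since phi_1 ... phi_{n+1} = id on P^n,
   every element of H_0 is uniquely phi_1^{a_1} ... phi_n^{a_n} with
   a in (Z_k)^n; we identify H_0 with the additive group 'rV['Z_k]_n.
   The element a acts on homogeneous coordinates by
   x_j |-> zeta^{a_j} x_j (j <= n), x_{n+1} |-> x_{n+1}. *)
Definition H0_act (R : realType) k n (a : 'rV['Z_k]_n) (x : 'I_n.+1 -> R[i])
    : 'I_n.+1 -> R[i] :=
  fun j => match @insub nat (fun m => (m < n)%N) 'I_n (nat_of_ord j) with
           | Some j' => zeta R k ^+ (nat_of_ord (a 0 j')) * x j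
           | None => x j
           end.

Definition fixed_point_on_M (R : realType) n d k (Lam : 'M[R[i]]_(n - d - 1, d))
    (a : 'rV['Z_k]_n) (x : 'I_n.+1 -> R[i]) : Prop :=
  nonzero_vec x /\ on_fermat k Lam x /\
  exists c : R[i], forall j, H0_act a x j = c * x j.

Definition acts_freely_on_M (R : realType) n d k (Lam : 'M[R[i]]_(n - d - 1, d))
    (K : {set 'rV['Z_k]_n}) : Prop :=
  forall a, a \in K -> a != 0 -> forall x, ~ fixed_point_on_M Lam a x.

(* Main.v *)
Require Import Defs.
From mathcomp Require Import all_boot all_order all_algebra all_fingroup.
From mathcomp Require Import all_classical all_reals all_analysis.
From mathcomp Require Import complex.
From mathcomp Require Import zify.
Import GRing.Theory Num.Theory.
Local Open Scope ring_scope.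

Lemma sum_delta (C : nzRingType) m (y : 'I_m -> C) (b : 'I_m) :
  \sum_(j < m) y j * (j == b)%:R = y b.
Proof.
rewrite (bigD1 b) //= eqxx mulr1 big1 ?addr0 // => j /negbTE ->; by rewrite mulr0.
Qed.

Lemma fermat_point (R : realType) n d k (Lam : 'M[R[i]]_(n - d - 1, d))
  (b1 b2 : 'I_n.+1) : (2 <= d)%N -> (d.+1 <= n)%N -> (0 < k)%N ->
  exists x, nonzero_vec x /\ on_fermat k Lam x /\ x b1 = 0 /\ x b2 = 0.
Proof.
move=> d2 dn k0.
pose E (i : nat) (j : 'I_n.+1) : R[i] :=
  (if (j < d)%N then lam0 Lam i j else 0) + (j == inord d)%:R
  + (j == inord (d.+1 + i))%:R.
pose A : 'M[R[i]]_(n.+1, (n - d).+2) := \matrix_(j, c)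
  (if (c < n - d)%N then E c j else if nat_of_ord c == (n - d)%N then (j == b1)%:R
   else (j == b2)%:R).
have rk : (0 < \rank (kermx A))%N.
  rewrite mxrank_ker.
  have := rank_leq_col A. lia.
have [[i0 j0] /= Hij|H0] := pickP (fun ij : 'I_n.+1 * 'I_n.+1 => kermx A ij.1 ij.2 != 0); last first.
  exfalso; move: rk; rewrite lt0n mxrank_eq0 => /negP; apply; apply/eqP/matrixP => i j.
  by have := H0 (i, j) => /= /negbFE /eqP ->; rewrite mxE.
pose y j := kermx A i0 j.
have eqs c : \sum_j y j * A j c = 0.
  have := mulmx_ker A; move/matrixP/(_ i0 c). by rewrite !mxE.
exists (fun j => k.-root (y j)).
have yK j : k.-root (y j) ^+ k = y j by rewrite rootCK.
split; first by exists j0; rewrite rootC_eq0.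
split; last first.
  have h1 : y b1 = 0.
    rewrite -(@sum_delta _ _ y); apply: etrans (eqs (Ordinal (leqnSn (n - d).+1))). by apply: eq_bigr => j _; rewrite mxE /= ltnn eqxx.
  have h2 : y b2 = 0.
    rewrite -(@sum_delta _ _ y); apply: etrans (eqs (Ordinal (leqnn (n - d).+2))).
    apply: eq_bigr => j _; rewrite mxE /= ltnNge leqnSn /=.
    by have -> : ((n - d).+1 == (n - d)%N)%N = false by elim: (n - d)%N.
  by rewrite h1 h2 rootC0.
move=> i hi.
have hi' : (i < (n - d).+2)%N by lia.
rewrite /Defs.coord /=.


rewrite (eq_bigr (fun j : 'I_d => lam0 Lam i j * y (inord j))); last by move=> j _; rewrite yK.
rewrite !yK.
symmetry; apply: etrans (esym (eqs (Ordinal hi'))) _.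
rewrite (eq_bigr (fun j => y j * (if (j < d)%N then lam0 Lam i j else 0)
   + y j * (j == inord d)%:R + y j * (j == inord (d.+1 + i))%:R)); last first.
  by move=> j _; rewrite mxE /= hi /E !mulrDr.
rewrite !big_split /= !sum_delta.
congr (_ + _ + _).
rewrite (big_ord_widen n.+1 (fun j => lam0 Lam i j * y (inord j))); last by lia.

rewrite [RHS]big_mkcond; apply: eq_bigr => j _ /=; rewrite inord_val.
by case: ifP => _; rewrite ?mulr0 // mulrC.
Qed.
Lemma bad (R : realType) n d p (Lam : 'M[R[i]]_(n - d - 1, d))
  (K : {group 'rV['Z_p]_n}) (a : 'rV['Z_p]_n) (v : 'Z_p) (b1 b2 : 'I_n.+1) :
  (2 <= d)%N -> (d.+1 <= n)%N -> (0 < p)%N -> acts_freely_on_M Lam K -> a \in K ->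
  (forall j : 'I_n, widen_ord (leqnSn n) j != b1 -> widen_ord (leqnSn n) j != b2 -> a 0 j = v) ->
  (ord_max != b1 -> ord_max != b2 -> v = 0) -> a = 0.
Proof.
move=> d2 dn p0 fr aK ha hv; case: (eqVneq a 0) => // anz; exfalso.
have [x [xnz [xf [x1 x2]]]] := @fermat_point R n d p Lam b1 b2 d2 dn p0.
apply: (fr a aK anz x); split; first by []; split; first by [].
exists (zeta R p ^+ v) => j; rewrite /H0_act.
case: insubP => [j' Hj Ej | Hj].
- have ej : j = widen_ord (leqnSn n) j' by apply/val_inj.
  case: (eqVneq j b1) => [->|n1]; first by rewrite x1 !mulr0.
  case: (eqVneq j b2) => [->|n2]; first by rewrite x2 !mulr0.
  by rewrite ha -?ej.
- have ej : j = ord_max by apply/val_inj; move: (ltn_ord j) Hj => /=; lia.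
  case: (eqVneq j b1) => [->|n1]; first by rewrite x1 !mulr0.
  case: (eqVneq j b2) => [->|n2]; first by rewrite x2 !mulr0.
  by rewrite hv -?ej //= expr0 mul1r.
Qed.
Lemma Zp_nz p c : prime p -> (c < p.-1)%N -> (c.+1)%:R != 0 :> 'Z_p.
Proof.
move=> pp cp; have p1 := prime_gt1 pp.
apply/eqP => /(congr1 (@nat_of_ord _)); rewrite val_Zp_nat // modn_small //=; lia.
Qed.

Lemma Zp_inj p c c' : prime p -> (c < p.-1)%N -> (c' < p.-1)%N ->
  (c.+1)%:R = (c'.+1)%:R :> 'Z_p -> c = c'.
Proof.
move=> pp cp cp'; have p1 := prime_gt1 pp.
move=> /(congr1 (@nat_of_ord _)); rewrite !val_Zp_nat // !modn_small //; lia.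
Qed.

Definition ev p n (j : 'I_n) (c : 'Z_p) : 'rV['Z_p]_n :=
  \row_k (if k == j then c else 0).
Arguments ev {p n}.

Lemma other n (j : 'I_n) : (1 < n)%N -> exists l : 'I_n, l != j.
Proof.
case: n j => [|n] j // n1.
case: (eqVneq j ord0) => [->|h]; last by exists ord0; rewrite eq_sym.
by exists ord_max; apply/eqP => /(congr1 val) /=; lia.
Qed.

Lemma subK p n (K : {group 'rV['Z_p]_n}) (a b : 'rV['Z_p]_n) : a \in K -> b \in K -> a - b \in K.
Proof. move=> Ha Hb. have := groupM Ha (_ : b^-1 \in K)%g. apply. by rewrite groupV. Qed.

Lemma negK p n (K : {group 'rV['Z_p]_n}) (a : 'rV['Z_p]_n) : a \in K -> - a \in K.
Proof. move=> Ha. have := groupVr Ha. by apply. Qed.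

Lemma case_ll (R : realType) n d p (Lam : 'M[R[i]]_(n - d - 1, d))
  (K : {group 'rV['Z_p]_n}) (j j' : 'I_n) (c c' : nat) :
  (2 <= d)%N -> (d.+1 <= n)%N -> prime p -> acts_freely_on_M Lam K ->
  (c < p.-1)%N -> (c' < p.-1)%N ->
  ev j (c.+1)%:R - ev j' (c'.+1)%:R \in K -> j = j' /\ c = c'.
Proof.
move=> d2 dn pp fr cp cp' hK.
have a0 : ev j ((c.+1)%:R : 'Z_p) - ev j' (c'.+1)%:R = 0.
  apply: (@bad R n d p Lam K _ 0 (widen_ord (leqnSn n) j) (widen_ord (leqnSn n) j')
     d2 dn (prime_gt0 pp) fr hK) => // l h1 h2.
  have n1 : l != j by apply: contraNneq h1 => ->.
  have n2 : l != j' by apply: contraNneq h2 => ->.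
  by rewrite !mxE (negbTE n1) (negbTE n2) subrr.
move/matrixP: a0 => /(_ 0 j); rewrite !mxE eqxx.
case: (eqVneq j j') => [<-|nj].
  by move/eqP; rewrite subr_eq0 => /eqP /Zp_inj -> //.
rewrite subr0 => /eqP; by rewrite (negbTE (@Zp_nz p c pp cp)).
Qed.

Lemma case_lr (R : realType) n d p (Lam : 'M[R[i]]_(n - d - 1, d))
  (K : {group 'rV['Z_p]_n}) (j : 'I_n) (c : nat) (t : 'Z_p) :
  (2 <= d)%N -> (d.+1 <= n)%N -> prime p -> acts_freely_on_M Lam K ->
  (c < p.-1)%N ->
  ev j (c.+1)%:R - \row_k t \in K -> False.
Proof.
move=> d2 dn pp fr cp hK.
have a0 : ev j ((c.+1)%:R : 'Z_p) - \row_k t = 0.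
  apply: (@bad R n d p Lam K _ (- t) (widen_ord (leqnSn n) j) ord_max
     d2 dn (prime_gt0 pp) fr hK); last by rewrite eqxx.
  move=> l h1 h2.
  have n1 : l != j by apply: contraNneq h1 => ->.
  by rewrite !mxE (negbTE n1) sub0r.
have [l nl] := @other n j (ltn_trans d2 dn).
move/matrixP: (a0) => /(_ 0 l); rewrite !mxE (negbTE nl) sub0r => /eqP.
rewrite oppr_eq0 => /eqP t0.
move/matrixP: a0 => /(_ 0 j); rewrite !mxE eqxx t0 subr0 => /eqP.
by rewrite (negbTE (@Zp_nz p c pp cp)).
Qed.

Lemma case_rr (R : realType) n d p (Lam : 'M[R[i]]_(n - d - 1, d))
  (K : {group 'rV['Z_p]_n}) (t t' : 'Z_p) :
  (2 <= d)%N -> (d.+1 <= n)%N -> prime p -> acts_freely_on_M Lam K ->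
  (\row_(k < n) t) - \row_k t' \in K -> t = t'.
Proof.
move=> d2 dn pp fr hK.
have a0 : (\row_(k < n) t) - \row_k t' = 0.
  apply: (@bad R n d p Lam K _ (t - t') ord_max ord_max
     d2 dn (prime_gt0 pp) fr hK); last by rewrite eqxx.
  by move=> l h1 h2; rewrite !mxE.
have l0 : (0 < n)%N by lia.
move/matrixP: a0 => /(_ 0 (Ordinal l0)); rewrite !mxE => /eqP.
by rewrite subr_eq0 => /eqP.
Qed.
Theorem mainTheorem5 (R : realType) (d n p r : nat)
  (Lam : 'M[R[i]]_(n - d - 1, d))
  (K : {group 'rV['Z_p]_n}) :
  (2 <= d)%N -> (d.+1 <= n)%N -> prime p -> (r <= n)%N ->
  X_nd Lam ->
  (K \isog [set: 'rV['Z_p]_(n - r)])%g ->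
  acts_freely_on_M Lam K ->
  (n.+1 <= (p ^ r - 1) %/ (p - 1))%N.
Proof.
move=> d2 dn pp rn _ iso fr.
have p1 : (1 < p)%N := prime_gt1 pp.
pose I := ('I_n * 'I_(p.-1) + 'Z_p)%type.
pose g (i : I) : 'rV['Z_p]_n :=
  match i with inl (j, c) => ev j ((nat_of_ord c).+1)%:R | inr t => \row_k t end.
have key : forall i i' : I, g i - g i' \in K -> i = i'.
  move=> [[j c]|t] [[j' c']|t'] /= hK.
  - have [-> /val_inj ->] := @case_ll R n d p Lam K j j' c c' d2 dn pp fr (ltn_ord c) (ltn_ord c') hK.
    by [].
  - by exfalso; apply: (@case_lr R n d p Lam K j c t' d2 dn pp fr (ltn_ord c) hK).
  - exfalso; apply: (@case_lr R n d p Lam K j' c' t d2 dn pp fr (ltn_ord c')).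
    by rewrite -opprB; apply: negK.
  - by rewrite (@case_rr R n d p Lam K t t' d2 dn pp fr hK).
have cardZ : #|{: 'Z_p}| = p by rewrite card_ord Zp_cast.
have cardK : #|K| = (p ^ (n - r))%N.
  by rewrite (card_isog iso) cardsT card_mx cardZ mul1n.
pose A := finset.setX [set: I] (K : {set 'rV['Z_p]_n}).
pose F (ik : I * 'rV['Z_p]_n) := g ik.1 + ik.2.
have inj : {in A &, injective F}.
  move=> [i k] [i' k'] /setXP [_ kK] /setXP [_ k'K]; rewrite /F /= => E.
  have ii : i = i'.
    apply: key.
    have -> : g i - g i' = k' - k.
      by rewrite -(addrK k (g i)) E addrAC [g i' + k']addrC addrK.
    exact: subK.
  by move: E; rewrite ii => /addrI ->.
have := card_in_imset inj.
rewrite cardsX cardsT cardK card_sum card_prod !card_ord => hc0.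
have hc : #|F @: A| = ((n * p.-1 + p) * p ^ (n - r))%N by rewrite hc0 Zp_cast.
have : (#|F @: A| <= p ^ n)%N.
  have hm : #|{: 'rV['Z_p]_n}| = (p ^ n)%N by rewrite card_mx cardZ mul1n.
  by rewrite -hm; apply: max_card.
have e : (p ^ n = p ^ r * p ^ (n - r))%N by rewrite -expnD subnKC.
rewrite hc e leq_pmul2r ?expn_gt0 ?(ltnW p1) // => h.
rewrite leq_divRL; last by lia.
move: h; set q := (p ^ r)%N; nia.
Qed.
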